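(* Consider equations $u_{tx}=f(t,x,u)$ with $f_{uu}\neq0$. Up to the equivalence transformations of this class ($\bar t=T(t),\ \bar x=X(x),\ v=mu+Y(t,x)$ and $\bar t=T(x),\ \bar x=X(t),\ v=mu+Y(t,x)$, with $m$ a real constant and $T'X'm\neq0$), there are exactly two families of equations admitting a one-parameter Lie point symmetry group generated by one of the canonical operators $\partial_t+\partial_x+\epsilon u\partial_u$, $\partial_t+\epsilon u\partial_u$ ($\epsilon=0,1$), $u\partial_u$, $g(t,x)\partial_u$ ($g\neq0$). They are: (1) symmetry $\langle\partial_t+\partial_x+\epsilon u\partial_u\rangle$ ($\epsilon=0,1$): $f=e^{\epsilon t}\tilde f(\theta,\omega)$, $\theta=t-x$, $\omega=e^{-\epsilon t}u$, with $\tilde f_{\omega\omega}\neq0$; (2) symmetry $\langle\partial_t+\epsilon u\partial_u\rangle$ ($\epsilon=0,1$): $f=e^{\epsilon t}\tilde f(x,\omega)$, $\omega=e^{-\epsilon t}u$, with $\tilde f_{\omega\omega}\neq0$. Here $\tilde f$ is an arbitrary smooth function of the indicated arguments.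
   Context: All functions are real-valued and smooth; considerations are local. *)

(* Defs.v *)
From mathcomp Require Import all_boot all_order all_algebra.
From mathcomp Require Import all_classical all_reals all_analysis.
Set Implicit Arguments. Unset Strict Implicit. Unset Printing Implicit Defensive.
Import Order.TTheory GRing.Theory Num.Theory.
Import numFieldNormedType.Exports.
Local Open Scope ring_scope.

Section Defs.
Context {R : realType}.

Inductive dir3 := Dt3 | Dx3 | Du3.

Definition pd3 (d : dir3) (F : R -> R -> R -> R) : R -> R -> R -> R :=
  match d with
  | Dt3 => fun t x u => derive1 (fun y => F y x u) t
  | Dx3 => fun t x u => derive1 (fun y => F t y u) x
  | Du3 => fun t x u => derive1 (fun y => F t x y) u
  end.

Definition iter_pd3 (l : seq dir3) (F : R -> R -> R -> R) := foldr pd3 F l.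

Definition smooth3 (F : R -> R -> R -> R) : Prop :=
  forall l : seq dir3,
    let G := iter_pd3 l F in
    continuous (fun v : R * R * R => G v.1.1 v.1.2 v.2) /\
    (forall t x u, [/\ derivable (fun y => G y x u) t 1,
                       derivable (fun y => G t y u) x 1 &
                       derivable (fun y => G t x y) u 1]).

Inductive dir2 := D1 | D2.

Definition pd2 (d : dir2) (F : R -> R -> R) : R -> R -> R :=
  match d with
  | D1 => fun a b => derive1 (fun y => F y b) a
  | D2 => fun a b => derive1 (fun y => F a y) b
  end.

Definition iter_pd2 (l : seq dir2) (F : R -> R -> R) := foldr pd2 F l.

Definition smooth2 (F : R -> R -> R) : Prop :=
  forall l : seq dir2,
    let G := iter_pd2 l F in
    continuous (fun v : R * R => G v.1 v.2) /\
    (forall a b, derivable (fun y => G y b) a 1 /\ derivable (fun y => G a y) b 1).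

(* Jet coordinates: p = u_t, q = u_x, r = u_tt, s = u_tx, w = u_xx. *)

Definition Dx0 (G : R -> R -> R -> R) (t x u q : R) : R :=
  pd3 Dx3 G t x u + q * pd3 Du3 G t x u.
Definition Dt0 (G : R -> R -> R -> R) (t x u p : R) : R :=
  pd3 Dt3 G t x u + p * pd3 Du3 G t x u.

Definition etaX (tau xi eta : R -> R -> R -> R) (t x u p q : R) : R :=
  Dx0 eta t x u q - Dx0 tau t x u q * p - Dx0 xi t x u q * q.

Definition DtJ1 (H : R -> R -> R -> R -> R -> R) (t x u p q r s : R) : R :=
  derive1 (fun y => H y x u p q) t + p * derive1 (fun y => H t x y p q) u
  + r * derive1 (fun y => H t x u y q) p + s * derive1 (fun y => H t x u p y) q.

Definition etaXT (tau xi eta : R -> R -> R -> R) (t x u p q r s w : R) : R :=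
  DtJ1 (etaX tau xi eta) t x u p q r s - Dt0 tau t x u p * s - Dt0 xi t x u p * w.

(* infinitesimal invariance criterion: pr^(2) Q (u_tx - f) = 0 on u_tx = f *)
Definition is_Lie_sym (f tau xi eta : R -> R -> R -> R) : Prop :=
  forall t x u p q r w,
    etaXT tau xi eta t x u p q r (f t x u) w =
    tau t x u * pd3 Dt3 f t x u + xi t x u * pd3 Dx3 f t x u
    + eta t x u * pd3 Du3 f t x u.

End Defs.

(* Main.v *)
Require Import Defs.
From mathcomp Require Import all_boot all_order all_algebra.
From mathcomp Require Import all_classical all_reals all_analysis.
From mathcomp Require Import ring lra.
Import Order.TTheory GRing.Theory Num.Theory.
Import numFieldNormedType.Exports.
Local Open Scope ring_scope.
Section S.
Context {R : realType}.
Local Open Scope classical_set_scope.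
Lemma near0P (P : R -> Prop) (d : R) : 0 < d ->
  (forall h, `|h| < d -> h != 0 -> P h) -> \forall h \near 0^', P h.
Proof.
move=> d0 hP. rewrite /dnbhs /within /=. apply/nbhs_ballP; exists d => // h /= bh hne.
apply: hP => //. by move: bh; rewrite /ball /= sub0r normrN.
Qed.

Lemma diag2 (H G : R -> R -> R) (L2 h0 : R) :
  (forall a k : R, is_derive a (1:R) (fun y => H y k) (G a k)) ->
  {for (h0,h0), continuous (fun v : R*R => G v.1 v.2)} ->
  is_derive h0 (1:R) (fun k => H h0 k) L2 ->
  is_derive h0 (1:R) (fun h => H h h) (G h0 h0 + L2).
Proof.
move=> dH cG dL.
suff hc : (fun h => h^-1 *: (((fun h => H h h) \o shift h0) (h *: 1) - H h0 h0)) @ 0^' --> G h0 h0 + L2.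
  by apply: DeriveDef; [apply/cvg_ex; exists (G h0 h0 + L2) | exact: cvg_lim].
have -> : (fun h => h^-1 *: (((fun h => H h h) \o shift h0) (h *: 1) - H h0 h0)) =
   (fun h => h^-1 * (H (h+h0) (h+h0) - H h0 (h+h0)) + h^-1 *: (((fun k => H h0 k) \o shift h0) (h *: 1) - H h0 h0)).
  apply/funext => h /=. rewrite /shift /= -[h *: 1]/(h * 1) mulr1 -[_ *: (_ - _)]/(_ * _) -mulrDr.
  by rewrite addrA subrK.
apply: cvgD; last first.
  have := @ex_derive _ _ _ _ _ _ _ dL; rewrite /derivable.
  by have <- : 'D_1 (fun k => H h0 k) h0 = L2 := derive_val.
apply/cvgrPdist_lt => eps eps0.
have := cG; move/cvgrPdist_lt/(_ eps eps0) => /nbhs_ballP [d d0 hd].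
move: d0 => /= d0. rewrite /dnbhs /within /=; apply/nbhs_ballP; exists d => // h /= bh hne.
move: bh; rewrite /ball /= sub0r normrN => bh.
have cH : forall k a b, {within `[a, b], continuous (fun y => H y k)}.
  move=> k a b; apply: continuous_subspaceT => x.
  apply: differentiable_continuous; apply/derivable1_diffP; exact: ex_derive.
have [c [cin ceq]] : exists c, (`|h0 - c| <= `|h|) /\
    (H (h+h0) (h+h0) - H h0 (h+h0) = G c (h+h0) * h).
  have [hp|hn] := ltP 0 h.
  - have le : h0 <= h + h0 by lra.
    have [c cin ceq] := @MVT_segment R (fun y => H y (h+h0)) (fun y => G y (h+h0)) _ _ le
      (fun x _ => dH x (h+h0)) (cH _ _ _).
    exists c; split; last by rewrite ceq addrK.
    move: cin; rewrite in_itv /= => /andP[c1 c2].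
    by rewrite (gtr0_norm hp) ler_distlC; apply/andP; split; lra.
  - have le : h + h0 <= h0 by lra.
    have [c cin ceq] := @MVT_segment R (fun y => H y (h+h0)) (fun y => G y (h+h0)) _ _ le
      (fun x _ => dH x (h+h0)) (cH _ _ _).
    exists c; split; last first.
      by rewrite -[LHS]opprK opprB ceq; ring.
    move: cin; rewrite in_itv /= => /andP[c1 c2].
    have hn' : h < 0 by rewrite lt_neqAle hne hn.
    by rewrite (ltr0_norm hn') ler_distlC; apply/andP; split; lra.
rewrite ceq mulrC mulfK //.
apply: (hd (c, h + h0)); split => /=.
- exact: le_lt_trans cin bh.
- by rewrite /ball /= (_ : h0 - (h + h0) = - h) ?normrN //; ring.
Qed.

Lemma der_comp (g phi : R -> R) (y dphi : R) : is_derive y (1:R) phi dphi ->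
  derivable g (phi y) 1 -> is_derive y (1:R) (fun z => g (phi z)) (derive1 g (phi y) * dphi).
Proof.
move=> dp dg. apply: (@is_derive1_comp R g phi y (derive1 g (phi y)) dphi) => //.
by rewrite derive1E; apply: derivableP.
Qed.

Lemma der_lin (c s y : R) : is_derive y (1:R) (fun z => c + s * z) s.
Proof.
have -> : (fun z => c + s * z) = cst c + s \*: (@id R) by apply/funext.
apply: is_derive_eq; rewrite add0r; exact: mulr1.
Qed.

Lemma der_exp (e u y : R) : is_derive y (1:R) (fun z => expR (e * z) * u) (e * expR (e * y) * u).
Proof.
have h1 := @der_comp expR _ _ _ (der_lin 0 e y) (@derivable_expR R (0 + e * y)).
have -> : (fun z => expR (e * z) * u) = u \*: (fun z => expR (0 + e * z)).
  by apply/funext => z /=; rewrite add0r mulrC.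
apply: is_derive_eq.
rewrite (_ : expR^`() (0 + e*y) = expR (0 + e*y)); last by rewrite derive1E; exact: derive_val.
rewrite add0r -[_ *: _]/(_ * _); ring.
Qed.

Lemma cont3 (P : R -> R -> R -> R) (g1 g2 g3 : R*R -> R) v :
  continuous (fun w : R*R*R => P w.1.1 w.1.2 w.2) -> {for v, continuous g1} ->
  {for v, continuous g2} -> {for v, continuous g3} ->
  {for v, continuous (fun v => P (g1 v) (g2 v) (g3 v))}.
Proof.
move=> cP c1 c2 c3.
apply: (@continuous_comp _ _ _ (fun v => ((g1 v, g2 v), g3 v)) (fun w => P w.1.1 w.1.2 w.2)).
- exact: (cvg_pair (cvg_pair c1 c2) c3).
- exact: cP.
Qed.

Lemma cont_a (t : R) v : {for v, continuous (fun v : R*R => t + v.1)}.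
Proof. apply: cvgD; [exact: cvg_cst | exact: cvg_fst]. Qed.
Lemma cont_b (t : R) v : {for v, continuous (fun v : R*R => t + v.2)}.
Proof. apply: cvgD; [exact: cvg_cst | exact: cvg_snd]. Qed.
Lemma cont_c (x b : R) v : {for v, continuous (fun v : R*R => x + b * v.2)}.
Proof. apply: cvgD; [exact: cvg_cst | apply: cvgM; [exact: cvg_cst | exact: cvg_snd]]. Qed.
Lemma cont_d (e u : R) v : {for v, continuous (fun v : R*R => expR (e * v.2) * u)}.
Proof.
apply: cvgM; last exact: cvg_cst.
apply: (@continuous_comp _ _ _ (fun v : R*R => e * v.2) expR).
  apply: cvgM; [exact: cvg_cst | exact: cvg_snd].
exact: continuous_expR.
Qed.

Lemma cont_c1 (x b : R) v : {for v, continuous (fun v : R*R => x + b * v.1)}.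
Proof. apply: cvgD; [exact: cvg_cst | apply: cvgM; [exact: cvg_cst | exact: cvg_fst]]. Qed.

Lemma der_shift (c y : R) : is_derive y (1:R) (fun z => c + z) 1.
Proof. have := der_lin c 1 y. by under eq_fun do rewrite mul1r. Qed.

Lemma curve (F : R -> R -> R -> R) (hF : smooth3 F) (t x u b e h0 : R) :
  is_derive h0 (1:R) (fun h => F (t + h) (x + b*h) (expR (e*h) * u))
   (pd3 Dt3 F (t+h0) (x+b*h0) (expR(e*h0)*u) +
    (pd3 Dx3 F (t+h0) (x+b*h0) (expR(e*h0)*u) * b +
     pd3 Du3 F (t+h0) (x+b*h0) (expR(e*h0)*u) * (e * expR(e*h0) * u))).
Proof.
have hF0 := (hF [::]).2; have /= cT := (hF [:: Dt3]).1; have /= cX := (hF [:: Dx3]).1.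
apply: (@diag2 (fun a k => F (t+a) (x+b*k) (expR(e*k)*u))
   (fun a k => pd3 Dt3 F (t+a) (x+b*k) (expR(e*k)*u))).
- move=> a k. have [d1 _ _] := hF0 (t + a) (x+b*k) (expR(e*k)*u).
  have := @der_comp (fun y => F y (x+b*k) (expR(e*k)*u)) (fun z => t + z) a 1 (der_shift t a) d1.
  by move/is_derive_eq; apply; rewrite mulr1.
- exact: (@cont3 (pd3 Dt3 F) _ _ _ _ cT) (cont_a t _) (cont_c x b _) (cont_d e u _).
apply: (@diag2 (fun a k => F (t+h0) (x+b*a) (expR(e*k)*u))
   (fun a k => pd3 Dx3 F (t+h0) (x+b*a) (expR(e*k)*u) * b)).
- move=> a k. have [_ d2 _] := hF0 (t + h0) (x+b*a) (expR(e*k)*u).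
  exact: (@der_comp (fun y => F (t+h0) y (expR(e*k)*u)) (fun z => x + b * z) a b (der_lin x b a) d2).
- apply: cvgM; last exact: cvg_cst.
  apply: (@cont3 (pd3 Dx3 F) _ _ _ _ cX); [exact: cvg_cst | exact: cont_c1 | exact: cont_d].
have [_ _ d3] := hF0 (t + h0) (x+b*h0) (expR(e*h0)*u).
by have := (@der_comp (fun y => F (t+h0) (x+b*h0) y) (fun z => expR (e*z) * u) h0 _ (der_exp e u h0) d3); apply.
Qed.
End S.

Section S2.
Context {R : realType}.
Local Open Scope classical_set_scope.

Lemma d1c (c x : R) : derive1 (fun _ : R => c) x = 0.
Proof. exact: derive1_cst. Qed.

Lemma d1lin (k x : R) : derive1 (fun y : R => k * y) x = k.
Proof.
have h : is_derive x (1:R) (fun y : R => k * y) k.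
  have -> : (fun y : R => k * y) = k \*: (@id R) by apply/funext.
  by apply: is_derive_eq; exact: mulr1.
by rewrite derive1E; exact: derive_val.
Qed.

Lemma d1linr (k x : R) : derive1 (fun y : R => y * k) x = k.
Proof. under eq_fun do rewrite mulrC. exact: d1lin. Qed.

Lemma d1id (x : R) : derive1 (fun y : R => y) x = 1.
Proof. have := d1lin 1 x. by under eq_fun do rewrite mul1r. Qed.

Lemma etaXT_lin (a c k t x u p q r s w : R) :
  etaXT (fun _ _ _ => a) (fun _ _ _ => c) (fun _ _ u => k*u) t x u p q r s w = s * k.
Proof.
have E : etaX (fun _ _ _ => a) (fun _ _ _ => c) (fun _ _ u : R => k*u) = fun t x u p q => q * k.
  apply/funext => t'; apply/funext => x'; apply/funext => u'; apply/funext => p'; apply/funext => q'.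
  rewrite /etaX /Dx0 /pd3 !d1c d1lin; ring.
rewrite /etaXT E /DtJ1 /Dt0 /pd3 !d1c d1linr; ring.
Qed.

Lemma etaXT_id (t x u p q r s w : R) :
  etaXT (fun _ _ _ => 0) (fun _ _ _ => 0) (fun _ _ u => u) t x u p q r s w = s.
Proof.
have E : etaX (fun _ _ _ => 0) (fun _ _ _ => 0) (fun _ _ u : R => u) = fun t x u p q => q.
  apply/funext => t'; apply/funext => x'; apply/funext => u'; apply/funext => p'; apply/funext => q'.
  rewrite /etaX /Dx0 /pd3 !d1c d1id; ring.
rewrite /etaXT E /DtJ1 /Dt0 /pd3 !d1c d1id; ring.
Qed.

Lemma etaXT_g (g : R -> R -> R) (t x u p q r s w : R) :
  etaXT (fun _ _ _ => 0) (fun _ _ _ => 0) (fun t x _ => g t x) t x u p q r s w =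
  derive1 (fun y => derive1 (fun z => g y z) x) t.
Proof.
have E : etaX (fun _ _ _ => 0) (fun _ _ _ => 0) (fun t x _ => g t x) =
   fun t x u p q => derive1 (fun z => g t z) x.
  apply/funext => t'; apply/funext => x'; apply/funext => u'; apply/funext => p'; apply/funext => q'.
  rewrite /etaX /Dx0 /pd3 !d1c; ring.
rewrite /etaXT E /DtJ1 /Dt0 /pd3 !d1c; ring.
Qed.

End S2.

Section S3.
Context {R : realType}.
Local Open Scope classical_set_scope.

Lemma lie_lin (F : R -> R -> R -> R) (a c k : R) :
  is_Lie_sym F (fun _ _ _ => a) (fun _ _ _ => c) (fun _ _ u => k*u) <->
  forall t x u, k * F t x u = a * pd3 Dt3 F t x u + c * pd3 Dx3 F t x u + k * u * pd3 Du3 F t x u.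
Proof.
split.
- move=> h t x u; have := h t x u 0 0 0 0; rewrite etaXT_lin mulrC => ->; by [].
- move=> h t x u p q r w; rewrite etaXT_lin mulrC; exact: h.
Qed.

Lemma der_scal (g : R -> R) (K y d : R) : is_derive y (1:R) g d ->
  is_derive y (1:R) (fun z => K * g z) (K * d).
Proof.
move=> hg.
have -> : (fun z => K * g z) = K \*: g by apply/funext.
by apply: is_derive_eq.
Qed.

Lemma der_mul (f g : R -> R) (y df dg : R) : is_derive y (1:R) f df -> is_derive y (1:R) g dg ->
  is_derive y (1:R) (fun z => f z * g z) (f y * dg + g y * df).
Proof.
move=> hf hg.
have -> : (fun z => f z * g z) = f * g by apply/funext.
by apply: is_derive_eq.
Qed.

Lemma forward (F : R -> R -> R -> R) (hF : smooth3 F) (b k : R) :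
  (forall t x u, k * F t x u = pd3 Dt3 F t x u + b * pd3 Dx3 F t x u + k * u * pd3 Du3 F t x u) ->
  forall t x u, F t x u = expR (k*t) * F 0 (x - b*t) (expR (-(k*t)) * u).
Proof.
move=> hL t x u.
set x0 := x - b*t; set om := expR (-(k*t)) * u.
pose phi h := (expR ((-k) * h) * 1) * F (0 + h) (x0 + b*h) (expR (k*h) * om).
have d0 : forall h, is_derive h (1:R) phi 0.
  move=> h.
  have := @der_mul _ _ _ _ _ (der_exp (-k) 1 h) (@curve _ F hF 0 x0 om b k h).
  move/is_derive_eq; apply.
  have L := hL (0+h) (x0+b*h) (expR(k*h)*om).
  set Ft := pd3 Dt3 F _ _ _ in L *; set Fx := pd3 Dx3 F _ _ _ in L *; set Fu := pd3 Du3 F _ _ _ in L *.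
  have -> : Ft = k * F (0+h) (x0+b*h) (expR(k*h)*om) - b * Fx - k * (expR(k*h)*om) * Fu.
    by rewrite L; ring.
  ring.
have := @is_derive_0_is_cst _ phi t 0 d0.
rewrite /phi !mulr0 !expR0 !add0r !mulr1 mul1r addr0.
rewrite mul1r /x0 subrK /om mulrA -expRD subrr expR0 mul1r mulNr => <-.
by rewrite mulrA -expRD subrr expR0 mul1r.
Qed.


Lemma backward (F : R -> R -> R -> R) (hF : smooth3 F) (b k : R) :
  (forall t x u h, F (t+h) (x+b*h) (expR(k*h)*u) = expR(k*h) * F t x u) ->
  forall t x u, k * F t x u = pd3 Dt3 F t x u + b * pd3 Dx3 F t x u + k * u * pd3 Du3 F t x u.
Proof.
move=> hI t x u.
have c1 := @curve _ F hF t x u b k 0.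
have E : (fun h => F (t + h) (x + b*h) (expR (k*h) * u)) = (fun h => expR (k*h) * F t x u).
  by apply/funext => h; exact: hI.
rewrite E in c1.
have c2 := der_exp k (F t x u) 0.
have := @derive_val _ _ _ _ _ _ _ c1. rewrite (@derive_val _ _ _ _ _ _ _ c2).
rewrite !mulr0 !addr0 expR0 => H.
transitivity (k * 1 * F t x u); first by rewrite mulr1.
rewrite H !mul1r; ring.
Qed.
End S3.


Fixpoint cnt (l : seq dir2) : nat :=
  match l with [::] => 0%N | D1 :: l => (cnt l).+1 | D2 :: l => cnt l end.
Definition cv (d : dir2) : dir3 := match d with D1 => Dx3 | D2 => Du3 end.

Section S4.
Context {R : realType}.
Local Open Scope classical_set_scope.

Lemma iter_ft (F : R -> R -> R -> R) (hF : smooth3 F) (s : R) l :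
  iter_pd2 l (fun a c => F 0 (0 + s*a) c) =
  fun a c => s ^+ cnt l * iter_pd3 (map cv l) F 0 (0 + s*a) c.
Proof.
elim: l => [|d l IH] /=.
  by apply/funext => a; apply/funext => c; rewrite expr0 mul1r.
rewrite IH; case: d => /=; apply/funext => a; apply/funext => c /=.
- have [d1 d2 d3] := (hF (map cv l)).2 0 (0+s*a) c.
  have h := @der_scal _ _ (s ^+ cnt l) _ _ (@der_comp _ (fun y => iter_pd3 (map cv l) F 0 y c) _ _ _ (der_lin 0 s a) d2).
  by rewrite derive1E (@derive_val _ _ _ _ _ _ _ h) exprS; ring.
- have [d1 d2 d3] := (hF (map cv l)).2 0 (0+s*a) c.
  by rewrite derive1Ml.
Qed.

Lemma ft_smooth (F : R -> R -> R -> R) (hF : smooth3 F) (s : R) :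
  smooth2 (fun a c => F 0 (0 + s*a) c).
Proof.
move=> l /=; rewrite (iter_ft F hF); split.
- move=> v /=. apply: cvgM; first exact: cvg_cst.
  apply: (@cont3 _ (iter_pd3 (map cv l) F) _ _ _ v (hF _).1); [exact: cvg_cst | exact: cont_c1 | exact: cvg_snd].
- move=> a c /=; have [d1 d2 d3] := (hF (map cv l)).2 0 (0+s*a) c.
  have [e1 e2 e3] := (hF (map cv l)).2 0 (0+s*a) c.
  split.
  + by case: (@der_scal _ _ (s ^+ cnt l) _ _ (@der_comp _ (fun y => iter_pd3 (map cv l) F 0 y c) _ _ _ (der_lin 0 s a) d2)).
  + by case: (@der_scal _ _ (s ^+ cnt l) _ _ (derivableP d3)).
Qed.

End S4.


Theorem theorem8 (R : realType) (f : R -> R -> R -> R)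
  (hf : smooth3 f)
  (hfuu : forall t x u, pd3 Du3 (pd3 Du3 f) t x u != 0) :
  (* (1) symmetry d_t + d_x + eps u d_u *)
  (forall eps : R, eps = 0 \/ eps = 1 ->
     (is_Lie_sym f (fun _ _ _ => 1) (fun _ _ _ => 1) (fun _ _ u => eps * u) <->
      exists ft : R -> R -> R,
        [/\ smooth2 ft,
            (forall th om, pd2 D2 (pd2 D2 ft) th om != 0) &
            (forall t x u,
               f t x u = expR (eps * t) * ft (t - x) (expR (- (eps * t)) * u))]))
  /\
  (* (2) symmetry d_t + eps u d_u *)
  (forall eps : R, eps = 0 \/ eps = 1 ->
     (is_Lie_sym f (fun _ _ _ => 1) (fun _ _ _ => 0) (fun _ _ u => eps * u) <->
      exists ft : R -> R -> R,
        [/\ smooth2 ft,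
            (forall y om, pd2 D2 (pd2 D2 ft) y om != 0) &
            (forall t x u,
               f t x u = expR (eps * t) * ft x (expR (- (eps * t)) * u))]))
  /\
  (* no equation of the class admits u d_u *)
  ~ is_Lie_sym f (fun _ _ _ => 0) (fun _ _ _ => 0) (fun _ _ u => u)
  /\
  (* no equation of the class admits g(t,x) d_u with g nonzero *)
  (forall g : R -> R -> R, smooth2 g -> (exists t x, g t x != 0) ->
     ~ is_Lie_sym f (fun _ _ _ => 0) (fun _ _ _ => 0) (fun t x _ => g t x)).
Proof.
split; [|split; [|split]].
- move=> eps _; split.
  + move=> /lie_lin hL.
    have hL' : forall t x u, eps * f t x u = pd3 Dt3 f t x u + 1 * pd3 Dx3 f t x u + eps * u * pd3 Du3 f t x u.
      by move=> t x u; rewrite hL mul1r.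
    have hrep := @forward _ f hf _ _ hL'.
    exists (fun a c => f 0 (0 + (-1) * a) c); split.
    * exact: ft_smooth.
    * move=> th om; exact: (hfuu 0 (0 + (-1) * th) om).
    * move=> t x u; rewrite {1}hrep; congr (_ * f 0 _ _); ring.
  + move=> [ft [_ _ hrep]]; apply/lie_lin.
    have hb := @backward _ f hf 1 eps.
    move=> t x u; rewrite hb ?mul1r //.
    move=> t' x' u' h; rewrite !hrep.
    have e1 : t' + h - (x' + 1*h) = t' - x' by ring.
    have e2 : expR (-(eps*(t'+h))) * (expR(eps*h)*u') = expR(-(eps*t')) * u'.
      by rewrite mulrA -expRD; congr (expR _ * u'); ring.
    have e3 : expR(eps*(t'+h)) = expR(eps*h) * expR(eps*t').
      by rewrite -expRD; congr expR; ring.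
    rewrite e1 e2 e3; ring.
- move=> eps _; split.
  + move=> /lie_lin hL.
    have hL' : forall t x u, eps * f t x u = pd3 Dt3 f t x u + 0 * pd3 Dx3 f t x u + eps * u * pd3 Du3 f t x u.
      by move=> t x u; rewrite hL mul1r.
    have hrep := @forward _ f hf _ _ hL'.
    exists (fun a c => f 0 (0 + 1 * a) c); split.
    * exact: ft_smooth.
    * move=> th om; exact: (hfuu 0 (0 + 1*th) om).
    * move=> t x u; rewrite {1}hrep; congr (_ * f 0 _ _); ring.
  + move=> [ft [_ _ hrep]]; apply/lie_lin.
    have hb := @backward _ f hf 0 eps.
    move=> t x u; rewrite hb ?mul1r //.
    move=> t' x' u' h; rewrite !hrep.
    have e1 : x' + 0*h = x' by ring.
    have e2 : expR (-(eps*(t'+h))) * (expR(eps*h)*u') = expR(-(eps*t')) * u'.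
      by rewrite mulrA -expRD; congr (expR _ * u'); ring.
    have e3 : expR(eps*(t'+h)) = expR(eps*h) * expR(eps*t').
      by rewrite -expRD; congr expR; ring.
    rewrite e1 e2 e3; ring.
- move=> H.
  have hL : forall t x u, f t x u = u * pd3 Du3 f t x u.
    move=> t x u; have := H t x u 0 0 0 0; rewrite etaXT_id /= => ->; ring.
  have E : (fun y => f 0 0 y) = (fun y => y * pd3 Du3 f 0 0 y) by apply/funext => y; exact: hL.
  have [_ _ dfu] := (hf [:: Du3]).2 0 0 1.
  have h := @der_mul _ (fun y => y) (fun y => pd3 Du3 f 0 0 y) 1 1 _ (is_derive_id (1:R) (1:R)) (derivableP dfu).
  have := @derive_val _ _ _ _ _ _ _ h; rewrite -E -!derive1E -/(pd3 Du3 f 0 0 1) -/(pd3 Du3 (pd3 Du3 f) 0 0 1).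
  move=> e; move/eqP: (hfuu 0 0 1); apply.
  move: e; rewrite mul1r mulr1 => e.
  have : pd3 Du3 f 0 0 1 - pd3 Du3 f 0 0 1 = pd3 Du3 (pd3 Du3 f) 0 0 1 + pd3 Du3 f 0 0 1 - pd3 Du3 f 0 0 1.
    by rewrite -e.
  by rewrite subrr addrK.
- move=> g _ [t0 [x0 hg]] H.
  set C := derive1 (fun y => derive1 (fun z => g y z) x0) t0.
  have hC : forall u, C = g t0 x0 * pd3 Du3 f t0 x0 u.
    move=> u; have := H t0 x0 u 0 0 0 0; rewrite etaXT_g /= => e; rewrite /C e; ring.
  have E : (fun u => g t0 x0 * pd3 Du3 f t0 x0 u) = (fun _ => C) by apply/funext => u; rewrite (hC u).
  have [_ _ dfu] := (hf [:: Du3]).2 t0 x0 0.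
  have := derive1Ml (g t0 x0) dfu.
  rewrite E d1c => /esym/eqP; rewrite mulf_eq0 (negbTE hg) /=.
  exact/negP/hfuu.
Qed.
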